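(* Let $n=1$, $r\in\{-1,+1\}$ and $\Phi(x,y)=r\phi(x-y)$. Let $f:\mathbb R\to\mathbb R$, $f(x)=\max_{i\in\{1,2\}}\Phi(x,y_i)-\beta_i$ for some $y_i,\beta_i\in\mathbb R$. Then for every $(\bar x,\bar v)\in\operatorname{graph}\partial f$, $f(x)\ge f(\bar x)+r\phi(x-\bar x+(\phi^* )'(r\bar v))-r\phi((\phi^* )'(r\bar v))$ for all $x\in\mathbb R$; i.e. $f$ is a-strongly convex if $r=+1$ and a-weakly convex if $r=-1$.
   Context: Standing assumption (here with $n=1$): $\phi:\mathbb R\to\mathbb R$ is convex, finite-valued, differentiable and strictly convex, super-coercive; $\phi^*$ has the same properties and $(\phi^* )'=(\phi')^{-1}$. $\partial f$ is the limiting subdifferential. a-weak convexity: for every $(\bar x,\bar v)\in\operatorname{graph}\partial f$, $f(x)\ge f(\bar x)-\phi(x-\bar x+(\phi^* )'(-\bar v))+\phi((\phi^* )'(-\bar v))$ for all $x$; a-strong convexity: $f(x)\ge f(\bar x)+\phi(x-\bar x+(\phi^* )'(\bar v))-\phi((\phi^* )'(\bar v))$ for all $x$. *)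

(* Defs.v *)
From HB Require Import structures.
From mathcomp Require Import all_boot all_order all_algebra.
From mathcomp Require Import all_classical all_reals all_analysis.
Set Implicit Arguments. Unset Strict Implicit. Unset Printing Implicit Defensive.
Import Order.TTheory GRing.Theory Num.Theory.
Import numFieldNormedType.Exports.
Local Open Scope classical_set_scope.
Local Open Scope ring_scope.

Section Defs.
Variable R : realType.

Definition convex_fun (g : R -> R) : Prop :=
  forall x y t, 0 <= t -> t <= 1 ->
    g (t * x + (1 - t) * y) <= t * g x + (1 - t) * g y.

Definition strictly_convex_fun (g : R -> R) : Prop :=
  forall x y t, x != y -> 0 < t -> t < 1 ->
    g (t * x + (1 - t) * y) < t * g x + (1 - t) * g y.

Definition differentiable_fun (g : R -> R) : Prop :=
  forall x, derivable g x 1.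

Definition super_coercive (g : R -> R) : Prop :=
  forall M : R, exists K : R, forall x : R, K < `|x| -> M < g x / `|x|.

Definition fconj (g : R -> R) (y : R) : R :=
  sup [set z | exists x, z = x * y - g x].

Definition frechet_subgrad (f : R -> R) (x v : R) : Prop :=
  forall eps : R, 0 < eps ->
    \forall y \near x, - (eps * `|y - x|) <= f y - f x - v * (y - x).

Definition limiting_subgrad (f : R -> R) (x v : R) : Prop :=
  exists (xs vs : nat -> R),
    xs n @[n --> \oo] --> x /\
    f (xs n) @[n --> \oo] --> f x /\
    vs n @[n --> \oo] --> v /\
    (forall n, frechet_subgrad f (xs n) (vs n)).

Definition standing_phi (phi : R -> R) : Prop :=
  convex_fun phi /\ differentiable_fun phi /\ strictly_convex_fun phi /\
  super_coercive phi /\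
  convex_fun (fconj phi) /\ differentiable_fun (fconj phi) /\
  strictly_convex_fun (fconj phi) /\ super_coercive (fconj phi) /\
  (forall x, derive1 (fconj phi) (derive1 phi x) = x) /\
  (forall y, derive1 phi (derive1 (fconj phi) y) = y).

End Defs.

(* Main.v *)
Require Import Defs.
From HB Require Import structures.
From mathcomp Require Import all_boot all_order all_algebra.
From mathcomp Require Import all_classical all_reals all_analysis.
From mathcomp Require Import ring lra.
Import Order.TTheory GRing.Theory Num.Theory.

Module AuxM.
Import numFieldNormedType.Exports.
Local Open Scope classical_set_scope.
Local Open Scope ring_scope.

Section Aux.
Variable R : realType.

Lemma nbhs_expl (x : R) (P : R -> Prop) : (\forall y \near x, P y) ->
  exists2 e : R, 0 < e & forall y, `|y - x| < e -> P y.
Proof.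
move=> /nbhs_ballP [e e0 H]; exists e => // y hy; apply: H.
by rewrite -ball_normE /= distrC.
Qed.

Lemma dnbhs0_expl (P : R -> Prop) : (\forall y \near (0:R)^', P y) ->
  exists2 e : R, 0 < e & forall y, y != 0 -> `|y| < e -> P y.
Proof.
move=> /nbhs_expl [e e0 H]; exists e => // y y0 hy; apply: H => //.
by rewrite subr0.
Qed.

Variable phi : R -> R.
Hypothesis hder : forall x, derivable phi x 1.

Lemma dq x : (fun h : R => h^-1 * (phi (h + x) - phi x)) @ (0:R)^' --> derive1 phi x.
Proof.
rewrite derive1E.
have := hder x; rewrite /derivable.
apply: cvg_trans; apply: near_eq_cvg; near=> h.
by rewrite /= [_%:A]mulr1.
Unshelve. all: by end_near. Qed.

Lemma dq_expl x (P : R -> Prop) : (\forall t \near derive1 phi x, P t) -> 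
  exists2 e : R, 0 < e & forall s, 0 < s -> s < e ->
    P (s^-1 * (phi (x + s) - phi x)) /\ P ((-s)^-1 * (phi (x - s) - phi x)).
Proof.
move=> HP.
have : \forall h \near (0:R)^', P (h^-1 * (phi (h + x) - phi x)) := dq x P HP.
move=> /dnbhs0_expl [e e0 He]; exists e => // s s0 se; split.
  have H1 : s != 0 by rewrite gt_eqF.
  have H2 : `|s| < e by rewrite gtr0_norm.
  by have := He s H1 H2; rewrite (addrC s x).
have H1 : - s != 0 by rewrite oppr_eq0 gt_eqF.
have H2 : `|- s| < e by rewrite normrN gtr0_norm.
by have := He (- s) H1 H2; rewrite (addrC (- s) x).
Qed.

Lemma Dp x c : derive1 phi x < c -> exists2 e : R, 0 < e & forall s, 0 < s -> s < e ->
   phi (x + s) - phi x < c * s.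
Proof.
move=> hc; have := @dq_expl x (fun t => t < c).
case. 
  by near=> t; near: t; apply: cvgr_lt hc; apply: cvg_id.
move=> e e0 He; exists e => // s s0 se; have [H _] := He s s0 se.
move: H; set A := phi _ - _; set t := s^-1 => H.
have ts : t * s = 1 by rewrite mulVf ?gt_eqF.
by rewrite -(ltr_pM2r s0) mulrAC ts mul1r in H.
Unshelve. all: by end_near. Qed.

Lemma mulVlt (s A c : R) : 0 < s -> (s^-1 * A < c) = (A < c * s).
Proof. by move=> s0; rewrite -(ltr_pM2r s0) mulrAC mulVf ?gt_eqF // mul1r. Qed.
Lemma mulVgt (s A c : R) : 0 < s -> (c < s^-1 * A) = (c * s < A).
Proof. by move=> s0; rewrite -(ltr_pM2r s0) mulrAC mulVf ?gt_eqF // mul1r. Qed.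

Lemma Dboth x c1 c2 : c1 < derive1 phi x -> derive1 phi x < c2 ->
  exists2 e : R, 0 < e & forall s, 0 < s -> s < e ->
   [/\ c1 * s < phi (x + s) - phi x, phi (x + s) - phi x < c2 * s,
       - c2 * s < phi (x - s) - phi x & phi (x - s) - phi x < - c1 * s].
Proof.
move=> h1 h2; have := @dq_expl x (fun t => c1 < t /\ t < c2).
case.
  near=> t; split.
    by near: t; apply: cvgr_gt h1; apply: cvg_id.
  by near: t; apply: cvgr_lt h2; apply: cvg_id.
move=> e e0 He; exists e => // s s0 se; have [[H1 H2] [H3 H4]] := He s s0 se.
move: H1 H2 H3 H4; rewrite invrN !mulNr mulVlt // mulVgt //.
rewrite ltrNl mulVgt // -ltrNr mulVlt //.
move=> H1 H2 H3 H4; split => //; lra.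
Unshelve. all: by end_near. Qed.

Hypothesis hconv : convex_fun phi.
Hypothesis hstr : strictly_convex_fun phi.

Lemma small_pos (d e : R) : 0 < d -> 0 < e ->
  exists s, [/\ 0 < s, s < d & s < e].
Proof.
move=> d0 e0; set m := Num.min d e.
have m0 : 0 < m by rewrite lt_min d0 e0.
have md : m <= d by rewrite ge_min lexx.
have me : m <= e by rewrite ge_min lexx orbT.
exists (m / 2); split; lra.
Qed.

Lemma tangent z y : phi z + derive1 phi z * (y - z) <= phi y.
Proof.
case: (ltrgtP y z) => [yz|zy|->]; last by rewrite subrr mulr0 addr0.
- rewrite leNgt; apply/negP => H.
  set d := z - y; have d0 : 0 < d by rewrite subr_gt0.
  set c := (phi z - phi y) / d.
  have cd : c * d = phi z - phi y by rewrite /c mulfVK ?gt_eqF.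
  have yzE : y - z = - d by rewrite /d opprB.
  rewrite yzE in H.
  have hc : derive1 phi z < c.
    by rewrite -(ltr_pM2r d0) cd; lra.
  have h1 : derive1 phi z - 1 < derive1 phi z by lra.
  have [e e0 He] := Dboth _ _ _ h1 hc.
  have [s [s0 sd se]] := small_pos _ _ d0 e0.
  have [_ _ H3 _] := He s s0 se.
  have := hconv y z (s / d).
  have -> : s / d * y + (1 - s / d) * z = z - s by rewrite /d; field; rewrite subr_eq0 gt_eqF.
  have t0 : 0 <= s / d by rewrite divr_ge0 // ltW.
  have t1 : s / d <= 1 by rewrite ler_pdivrMr // mul1r ltW.
  move=> /(_ t0 t1).
  have -> : s / d * phi y + (1 - s / d) * phi z = phi z - c * s.
    by rewrite /c /d; field; rewrite subr_eq0 gt_eqF.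
  lra.
- rewrite leNgt; apply/negP => H.
  set d := y - z; have d0 : 0 < d by rewrite subr_gt0.
  set c := (phi y - phi z) / d.
  have cd : c * d = phi y - phi z by rewrite /c mulfVK ?gt_eqF.
  have hc : c < derive1 phi z.
    have H' : phi y < phi z + derive1 phi z * d := H.
    rewrite -(ltr_pM2r d0) cd; lra.
  have h1 : derive1 phi z < derive1 phi z + 1 by lra.
  have [e e0 He] := Dboth _ _ _ hc h1.
  have [s [s0 sd se]] := small_pos _ _ d0 e0.
  have [H3 _ _ _] := He s s0 se.
  have := hconv y z (s / d).
  have -> : s / d * y + (1 - s / d) * z = z + s by rewrite /d; field; rewrite subr_eq0 gt_eqF.
  have t0 : 0 <= s / d by rewrite divr_ge0 // ltW.
  have t1 : s / d <= 1 by rewrite ler_pdivrMr // mul1r ltW.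
  move=> /(_ t0 t1).
  have -> : s / d * phi y + (1 - s / d) * phi z = phi z + c * s.
    by rewrite /c /d; field; rewrite subr_eq0 gt_eqF.
  lra.
Qed.


Lemma dmono a b : a < b -> derive1 phi a < derive1 phi b.
Proof.
move=> ab; set m := (a + b) / 2; set h := m - a.
have h0 : 0 < h by rewrite /h /m; lra.
have H : phi m < 1/2 * phi a + (1 - 1/2) * phi b.
  have -> : m = 1/2 * a + (1 - 1/2) * b by rewrite /m; field.
  by apply: hstr; rewrite ?(lt_eqF ab) //; lra.
have T1 := tangent a m; have T2 := tangent b m.
have E1 : m - a = h by [].
have E2 : m - b = - h by rewrite /h /m; field.
rewrite E1 in T1; rewrite E2 in T2.
have key : derive1 phi a * h < derive1 phi b * h by lra.
by rewrite ltr_pM2r in key.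
Qed.

Lemma dmonoW a b : a <= b -> derive1 phi a <= derive1 phi b.
Proof. by rewrite le_eqVlt => /orP [/eqP -> //| /dmono /ltW]. Qed.

Lemma major a b c d : a <= b -> b <= d -> a <= c -> c <= d -> b + c = a + d ->
  phi b + phi c <= phi a + phi d.
Proof.
move=> ab bd ac cd e.
case: (eqVneq a d) => [ad|ad].
  have bE : b = a by apply/eqP; rewrite eq_le ab andbT; rewrite ad.
  have cE : c = a by apply/eqP; rewrite eq_le ac andbT; rewrite ad.
  by rewrite bE cE ad.
have da : 0 < d - a.
  rewrite subr_gt0 lt_neqAle ad /=; exact: le_trans ab bd.
set l := (d - b) / (d - a).
have l0 : 0 <= l by apply: divr_ge0; lra.
have l1 : l <= 1 by rewrite ler_pdivrMr // mul1r; lra.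
have H1 := hconv a d l l0 l1.
have H2 := hconv d a l l0 l1.
have E1 : l * a + (1 - l) * d = b.
  by rewrite /l; field; rewrite subr_eq0 eq_sym.
have E2 : l * d + (1 - l) * a = c.
  have -> : c = a + d - b by rewrite -e; ring.
  by rewrite /l; field; rewrite subr_eq0 eq_sym.
rewrite E1 in H1; rewrite E2 in H2.
lra.
Qed.


Lemma min_pos3 (a b c : R) : 0 < a -> 0 < b -> 0 < c ->
  exists2 E, 0 < E & [/\ E <= a, E <= b & E <= c].
Proof.
move=> a0 b0 c0; exists (Num.min a (Num.min b c)).
  by rewrite !lt_min a0 b0 c0.
by split; rewrite !ge_min ?lexx ?orbT.
Qed.

Lemma cont_upper (g : R -> R) p z : {for p, continuous g} -> g p < z ->
  exists2 e, 0 < e & forall y, `|y - p| < e -> g y < z.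
Proof.
move=> gc gz; apply: nbhs_expl.
exact: (@cvgr_lt R _ (nbhs p) _ g (g p) gc z gz).
Qed.

Lemma frechet_expl (F : R -> R) p v sg eps : `|sg| = 1 -> 0 < eps ->
  frechet_subgrad F p v ->
  exists2 ef, 0 < ef & forall s, 0 < s -> s < ef ->
    F p + (sg * v - eps) * s <= F (p + sg * s).
Proof.
move=> hs e0 /(_ eps e0) /nbhs_expl [ef ef0 H]; exists ef => // s s0 se.
have E : p + sg * s - p = sg * s by rewrite addrC addKr.
have N : `|sg * s| = s by rewrite normrM hs mul1r gtr0_norm.
have := H (p + sg * s); rewrite E N => /(_ se).
lra.
Qed.


Lemma perk (g F : R -> R) p v sg eps e0 ef : {for p, continuous g} -> `|sg| = 1 ->
  0 < eps -> eps < e0 -> 0 < ef ->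
  (forall s, 0 < s -> s < ef -> F p + (sg * v - eps) * s <= F (p + sg * s)) ->
  g p <= F p ->
  (g p < F p \/ exists2 e, 0 < e & forall s, 0 < s -> s < e ->
      g (p + sg * s) - g p <= (sg * v - e0) * s) ->
  exists2 E, 0 < E & forall s, 0 < s -> s < E -> g (p + sg * s) < F (p + sg * s).
Proof.
move=> gc hs eps0 epse ef0 HF gF [inact|[e e0' He]].
- set eta := F p - g p.
  have eta0 : 0 < eta by rewrite /eta subr_gt0.
  have [ec ec0 Hc] := @cont_upper g p (g p + eta / 2) gc ltac:(lra).
  set K := `|sg * v - eps| + 1.
  have K0 : 0 < K by rewrite /K ltr_pwDr.
  have eK : 0 < eta / 2 / K by rewrite divr_gt0 // divr_gt0.
  have [E E0 [E1 E2 E3]] := min_pos3 _ _ _ ec0 ef0 eK.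
  exists E => // s s0 sE.
  have N : `|p + sg * s - p| < ec.
    by rewrite addrC addKr normrM hs mul1r gtr0_norm //; apply: lt_le_trans E1.
  have G := Hc _ N.
  have F1 := HF s s0 (lt_le_trans sE E2).
  have sK : s * K < eta / 2.
    by rewrite -ltr_pdivlMr //; apply: lt_le_trans E3.
  have A : - ((sg * v - eps) * s) <= `|sg * v - eps| * s.
    rewrite -mulNr; apply: ler_wpM2r; first exact: ltW.
    by rewrite -normrN; exact: ler_norm.
  have KE : s * K = `|sg * v - eps| * s + s by rewrite /K; ring.
  move: G sK A KE F1; rewrite /eta; set NN := `|_|; set MM := (_ * s).
  move=> *; lra.
- have [E E0 [E1 E2 _]] := min_pos3 _ _ _ e0' ef0 ltr01.
  exists E => // s s0 sE.
  have G := He s s0 (lt_le_trans sE E1).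
  have F1 := HF s s0 (lt_le_trans sE E2).
  have : eps * s < e0 * s by rewrite ltr_pM2r.
  lra.
Qed.

Lemma core (g1 g2 : R -> R) p v sg :
  {for p, continuous g1} -> {for p, continuous g2} -> `|sg| = 1 ->
  frechet_subgrad (fun x => Num.max (g1 x) (g2 x)) p v ->
  (exists2 e0, 0 < e0 & g1 p < Num.max (g1 p) (g2 p) \/
     exists2 e, 0 < e & forall s, 0 < s -> s < e ->
       g1 (p + sg * s) - g1 p <= (sg * v - e0) * s) ->
  (exists2 e0, 0 < e0 & g2 p < Num.max (g1 p) (g2 p) \/
     exists2 e, 0 < e & forall s, 0 < s -> s < e ->
       g2 (p + sg * s) - g2 p <= (sg * v - e0) * s) ->
  False.
Proof.
move=> c1 c2 hs hF [e01 e010 H1] [e02 e020 H2].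
set F := fun x => Num.max (g1 x) (g2 x).
set eps := Num.min e01 e02 / 2.
have m0 : 0 < Num.min e01 e02 by rewrite lt_min e010 e020.
have m1 : Num.min e01 e02 <= e01 by rewrite ge_min lexx.
have m2 : Num.min e01 e02 <= e02 by rewrite ge_min lexx orbT.
have eps0 : 0 < eps by rewrite /eps; lra.
have [ef ef0 HF] := @frechet_expl F p v sg eps hs eps0 hF.
have [E1 E10 HE1] := @perk g1 F p v sg eps e01 ef c1 hs eps0 ltac:(rewrite /eps; lra) ef0 HF
  ltac:(by rewrite /F le_max lexx) H1.
have [E2 E20 HE2] := @perk g2 F p v sg eps e02 ef c2 hs eps0 ltac:(rewrite /eps; lra) ef0 HF
  ltac:(by rewrite /F le_max lexx orbT) H2.
have [s [s0 s1 s2]] := small_pos _ _ E10 E20.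
have := HE1 s s0 s1; have := HE2 s s0 s2.
rewrite /F !lt_max !ltxx /= => L1 L2.
by move: L1 L2; set a := g1 _; set b := g2 _ => L1 L2; lra.
Qed.


Lemma phicont x : {for x, continuous phi}.
Proof. exact/differentiable_continuous/derivable1_diffP. Qed.

Lemma gcont (r y b p : R) : {for p, continuous (fun x => r * phi (x - y) - b)}.
Proof.
apply: continuousB; last exact: cst_continuous.
apply: continuousM; first exact: cst_continuous.
apply: (@continuous_comp _ _ _ (fun x => x - y) phi).
  apply: continuousB; [exact: cvg_id | exact: cst_continuous].
exact: phicont.
Qed.


Lemma kU1 y b p v w : derive1 phi w = v -> p - y < w ->
  exists2 e0, 0 < e0 & exists2 e, 0 < e & forall s, 0 < s -> s < e ->
    (1 * phi (p + 1 * s - y) - b) - (1 * phi (p - y) - b) <= (1 * v - e0) * s.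
Proof.
move=> hw aw; have := dmono _ _ aw; rewrite hw => hv.
set a := p - y.
exists ((v - derive1 phi a) / 2); first by rewrite divr_gt0 // subr_gt0.
have h1 : derive1 phi a - 1 < derive1 phi a by lra.
have h2 : derive1 phi a < v - (v - derive1 phi a) / 2 by lra.
have [e e0 He] := Dboth _ _ _ h1 h2.
exists e => // s s0 se; have [_ H _ _] := He s s0 se.
have -> : p + 1 * s - y = a + s by rewrite /a; ring.
rewrite !mul1r; lra.
Qed.

Lemma kL1 y b p v w : derive1 phi w = v -> w < p - y ->
  exists2 e0, 0 < e0 & exists2 e, 0 < e & forall s, 0 < s -> s < e ->
    (1 * phi (p + -1 * s - y) - b) - (1 * phi (p - y) - b) <= (-1 * v - e0) * s.
Proof.
move=> hw aw; have := dmono _ _ aw; rewrite hw => hv.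
set a := p - y.
exists ((derive1 phi a - v) / 2); first by rewrite divr_gt0 // subr_gt0.
have h1 : v + (derive1 phi a - v) / 2 < derive1 phi a by lra.
have h2 : derive1 phi a < derive1 phi a + 1 by lra.
have [e e0 He] := Dboth _ _ _ h1 h2.
exists e => // s s0 se; have [_ _ _ H] := He s s0 se.
have -> : p + -1 * s - y = a - s by rewrite /a; ring.
rewrite !mul1r; lra.
Qed.

Lemma kUm1 y b p v w : derive1 phi w = -1 * v -> p - y < w ->
  exists2 e0, 0 < e0 & exists2 e, 0 < e & forall s, 0 < s -> s < e ->
    (-1 * phi (p + -1 * s - y) - b) - (-1 * phi (p - y) - b) <= (-1 * v - e0) * s.
Proof.
move=> hw aw; have := dmono _ _ aw; rewrite hw => hv.
set a := p - y.
exists (- v - derive1 phi a); first by lra.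
exists 1 => // s s0 _.
have -> : p + -1 * s - y = a - s by rewrite /a; ring.
have T := tangent a (a - s).
have E : a - s - a = - s by ring.
rewrite E in T.
lra.
Qed.

Lemma kLm1 y b p v w : derive1 phi w = -1 * v -> w < p - y ->
  exists2 e0, 0 < e0 & exists2 e, 0 < e & forall s, 0 < s -> s < e ->
    (-1 * phi (p + 1 * s - y) - b) - (-1 * phi (p - y) - b) <= (1 * v - e0) * s.
Proof.
move=> hw aw; have := dmono _ _ aw; rewrite hw => hv.
set a := p - y.
exists (v + derive1 phi a); first by lra.
exists 1 => // s s0 _.
have -> : p + 1 * s - y = a + s by rewrite /a; ring.
have T := tangent a (a + s).
have E : a + s - a = s by ring.
rewrite E in T.
lra.
Qed.


Lemma PNgen (r sg y1 y2 b1 b2 p v w : R) (cmp : R -> R -> bool) :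
  `|sg| = 1 ->
  frechet_subgrad (fun x => Num.max (r * phi (x - y1) - b1) (r * phi (x - y2) - b2)) p v ->
  (forall y b, ~~ cmp w (p - y) -> exists2 e0, 0 < e0 & exists2 e, 0 < e &
     forall s, 0 < s -> s < e ->
       (r * phi (p + sg * s - y) - b) - (r * phi (p - y) - b) <= (sg * v - e0) * s) ->
  forall G1 G2, G1 = r * phi (p - y1) - b1 -> G2 = r * phi (p - y2) - b2 ->
  [|| (G1 == Num.max G1 G2) && cmp w (p - y1) | (G2 == Num.max G1 G2) && cmp w (p - y2)].
Proof.
move=> hs hF hk G1 G2 E1 E2; apply/negPn/negP; rewrite negb_or => /andP [n1 n2].
have aux : forall G y b, G = r * phi (p - y) - b -> G <= Num.max G1 G2 ->
    ~~ ((G == Num.max G1 G2) && cmp w (p - y)) ->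
    exists2 e0, 0 < e0 & G < Num.max G1 G2 \/ exists2 e, 0 < e &
     forall s, 0 < s -> s < e ->
       (r * phi (p + sg * s - y) - b) - (r * phi (p - y) - b) <= (sg * v - e0) * s.
  move=> G y b GE GM; case: (eqVneq G (Num.max G1 G2)) => [GeM|GnM] /=.
    move=> /(hk y b) [e0 e00 H]; exists e0 => //; right; exact: H.
  by move=> _; exists 1 => //; left; rewrite lt_neqAle GnM GM.
have A1 := aux G1 y1 b1 E1 (ltac:(by rewrite le_max lexx)) n1.
have A2 := aux G2 y2 b2 E2 (ltac:(by rewrite le_max lexx orbT)) n2.
rewrite E1 E2 in A1 A2.
exact: (core (fun x => r * phi (x - y1) - b1) (fun x => r * phi (x - y2) - b2) p v sg
  (gcont r y1 b1 p) (gcont r y2 b2 p) hs hF A1 A2).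
Qed.


Lemma PN (r y1 y2 b1 b2 p v w : R) : (r = 1 \/ r = -1) -> derive1 phi w = r * v ->
  frechet_subgrad (fun x => Num.max (r * phi (x - y1) - b1) (r * phi (x - y2) - b2)) p v ->
  forall G1 G2, G1 = r * phi (p - y1) - b1 -> G2 = r * phi (p - y2) - b2 ->
  [|| (G1 == Num.max G1 G2) && (w <= p - y1) | (G2 == Num.max G1 G2) && (w <= p - y2)] /\
  [|| (G1 == Num.max G1 G2) && (p - y1 <= w) | (G2 == Num.max G1 G2) && (p - y2 <= w)].
Proof.
move=> hr hw hF G1 G2 E1 E2.
have n1 : `|1 : R| = 1 by rewrite normr1.
have nm1 : `|-1 : R| = 1 by rewrite normrN normr1.
case: hr => rE; rewrite rE in hw hF E1 E2; split.
- apply: (@PNgen 1 1 y1 y2 b1 b2 p v w (fun a b => a <= b) n1 hF _ G1 G2 E1 E2).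
  move=> y b; rewrite -ltNge => h; exact: (kU1 y b p v w (etrans hw (mul1r v)) h).
- apply: (@PNgen 1 (-1) y1 y2 b1 b2 p v w (fun a b => b <= a) nm1 hF _ G1 G2 E1 E2).
  move=> y b; rewrite -ltNge => h; exact: (kL1 y b p v w (etrans hw (mul1r v)) h).
- apply: (@PNgen (-1) (-1) y1 y2 b1 b2 p v w (fun a b => a <= b) nm1 hF _ G1 G2 E1 E2).
  move=> y b; rewrite -ltNge => h; exact: (kUm1 y b p v w hw h).
- apply: (@PNgen (-1) 1 y1 y2 b1 b2 p v w (fun a b => b <= a) n1 hF _ G1 G2 E1 E2).
  move=> y b; rewrite -ltNge => h; exact: (kLm1 y b p v w hw h).
Qed.


Lemma LL2 (wn m1 m2 un : nat -> R) (M1 M2 u w : R) :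
  (\forall n \near \oo, wn n <= m1 n \/ wn n <= m2 n) ->
  m1 n @[n --> \oo] --> M1 -> m2 n @[n --> \oo] --> M2 -> un n @[n --> \oo] --> u ->
  (forall n, derive1 phi (wn n) = un n) -> derive1 phi w = u ->
  w <= M1 \/ w <= M2.
Proof.
move=> H c1 c2 cu hn hw.
case: (lerP w M1) => [|h1]; first by left.
case: (lerP w M2) => [|h2]; first by right.
exfalso.
set c := (Num.max M1 M2 + w) / 2.
have mm1 : M1 <= Num.max M1 M2 by rewrite le_max lexx.
have mm2 : M2 <= Num.max M1 M2 by rewrite le_max lexx orbT.
have mw : Num.max M1 M2 < w by rewrite gt_max h1 h2.
have cw : c < w by rewrite /c ?eG1 ?eG2; lra.
have hc : derive1 phi c < u by rewrite -hw; apply: dmono.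
have E1 : \forall n \near \oo, m1 n < c by apply: (@cvgr_lt R _ _ _ m1 M1 c1 c); rewrite /c ?eG1 ?eG2; lra.
have E2 : \forall n \near \oo, m2 n < c by apply: (@cvgr_lt R _ _ _ m2 M2 c2 c); rewrite /c ?eG1 ?eG2; lra.
have E3 : \forall n \near \oo, derive1 phi c < un n by apply: (@cvgr_gt R _ _ _ un u cu).
have : \forall n \near \oo, False.
  near=> n.
  have e1 : m1 n < c by near: n.
  have e2 : m2 n < c by near: n.
  have e3 : derive1 phi c < un n by near: n.
  have e4 : wn n <= m1 n \/ wn n <= m2 n by near: n.
  have e5 : wn n <= c by case: e4 => e4; lra.
  have := dmonoW _ _ e5; rewrite hn; lra.
by move=> /filter_ex [].
Unshelve. all: by end_near. Qed.


Lemma LL2' (wn m1 m2 un : nat -> R) (M1 M2 u w : R) :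
  (\forall n \near \oo, m1 n <= wn n \/ m2 n <= wn n) ->
  m1 n @[n --> \oo] --> M1 -> m2 n @[n --> \oo] --> M2 -> un n @[n --> \oo] --> u ->
  (forall n, derive1 phi (wn n) = un n) -> derive1 phi w = u ->
  M1 <= w \/ M2 <= w.
Proof.
move=> H c1 c2 cu hn hw.
case: (lerP M1 w) => [|h1]; first by left.
case: (lerP M2 w) => [|h2]; first by right.
exfalso.
set c := (Num.min M1 M2 + w) / 2.
have mm1 : Num.min M1 M2 <= M1 by rewrite ge_min lexx.
have mm2 : Num.min M1 M2 <= M2 by rewrite ge_min lexx orbT.
have mw : w < Num.min M1 M2 by rewrite lt_min h1 h2.
have cw : w < c by rewrite /c ?eG1 ?eG2; lra.
have hc : u < derive1 phi c by rewrite -hw; apply: dmono.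
have E1 : \forall n \near \oo, c < m1 n by apply: (@cvgr_gt R _ _ _ m1 M1 c1 c); rewrite /c ?eG1 ?eG2; lra.
have E2 : \forall n \near \oo, c < m2 n by apply: (@cvgr_gt R _ _ _ m2 M2 c2 c); rewrite /c ?eG1 ?eG2; lra.
have E3 : \forall n \near \oo, un n < derive1 phi c by apply: (@cvgr_lt R _ _ _ un u cu).
have : \forall n \near \oo, False.
  near=> n.
  have e1 : c < m1 n by near: n.
  have e2 : c < m2 n by near: n.
  have e3 : un n < derive1 phi c by near: n.
  have e4 : m1 n <= wn n \/ m2 n <= wn n by near: n.
  have e5 : c <= wn n by case: e4 => e4; lra.
  have := dmonoW _ _ e5; rewrite hn; lra.
by move=> /filter_ex [].
Unshelve. all: by end_near. Qed.

Lemma hmono s s' t : s <= s' -> 0 <= t -> phi (t + s) - phi s <= phi (t + s') - phi s'.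
Proof.
move=> ss t0; have := @major s (t + s) s' (t + s') ltac:(lra) ltac:(lra) ss ltac:(lra) ltac:(ring).
lra.
Qed.

Lemma hmono2 s s' t : s <= s' -> t <= 0 -> phi (t + s') - phi s' <= phi (t + s) - phi s.
Proof.
move=> ss t0; have := @major (t + s) s (t + s') s' ltac:(lra) ss ltac:(lra) ltac:(lra) ltac:(ring).
lra.
Qed.


Lemma FIN (r y1 y2 b1 b2 xb w x : R) : (r = 1 \/ r = -1) ->
  forall G1 G2, G1 = r * phi (xb - y1) - b1 -> G2 = r * phi (xb - y2) - b2 ->
  [|| (G1 == Num.max G1 G2) && (w <= xb - y1) | (G2 == Num.max G1 G2) && (w <= xb - y2)] ->
  [|| (G1 == Num.max G1 G2) && (xb - y1 <= w) | (G2 == Num.max G1 G2) && (xb - y2 <= w)] ->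
  Num.max G1 G2 + r * phi (x - xb + w) - r * phi w <=
    Num.max (r * phi (x - y1) - b1) (r * phi (x - y2) - b2).
Proof.
move=> hr G1 G2 E1 E2 U L.
set t := x - xb.
set RHS := Num.max (r * phi (x - y1) - b1) _.
have one : forall G y b, G = r * phi (xb - y) - b -> G == Num.max G1 G2 ->
    r * phi (x - y) - b <= RHS ->
    r * (phi (t + w) - phi w) <= r * (phi (t + (xb - y)) - phi (xb - y)) ->
    Num.max G1 G2 + r * phi (t + w) - r * phi w <= RHS.
  move=> G y b GE /eqP GM hR hb; apply: le_trans hR.
  have -> : x - y = t + (xb - y) by rewrite /t; ring.
  rewrite -GM GE; lra.
have R1 : r * phi (x - y1) - b1 <= RHS by rewrite /RHS le_max lexx.
have R2 : r * phi (x - y2) - b2 <= RHS by rewrite /RHS le_max lexx orbT.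
case: hr => rE; case: (lerP 0 t) => ht.
- case/orP: U => /andP [g h].
    by apply: (one G1 y1 b1 E1 g R1); rewrite rE !mul1r; exact: hmono.
  by apply: (one G2 y2 b2 E2 g R2); rewrite rE !mul1r; exact: hmono.
- case/orP: L => /andP [g h].
    by apply: (one G1 y1 b1 E1 g R1); rewrite rE !mul1r; apply: hmono2 => //; exact: ltW.
  by apply: (one G2 y2 b2 E2 g R2); rewrite rE !mul1r; apply: hmono2 => //; exact: ltW.
- case/orP: L => /andP [g h].
    by apply: (one G1 y1 b1 E1 g R1); rewrite rE !mulN1r lerN2; exact: hmono.
  by apply: (one G2 y2 b2 E2 g R2); rewrite rE !mulN1r lerN2; exact: hmono.
- case/orP: U => /andP [g h].
    by apply: (one G1 y1 b1 E1 g R1); rewrite rE !mulN1r lerN2; apply: hmono2 => //; exact: ltW.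
  by apply: (one G2 y2 b2 E2 g R2); rewrite rE !mulN1r lerN2; apply: hmono2 => //; exact: ltW.
Qed.


Lemma pickboth (G1 G2 : R) (P1 P2 : bool) :
  [|| (G1 == Num.max G1 G2) && P1 | (G2 == Num.max G1 G2) && P2] -> P1 \/ P2.
Proof. by case/orP => /andP [_ h]; [left|right]. Qed.

Lemma pick1 (G1 G2 : R) (P1 P2 : bool) : G2 < G1 ->
  [|| (G1 == Num.max G1 G2) && P1 | (G2 == Num.max G1 G2) && P2] -> P1.
Proof.
move=> lt; case/orP => /andP [e h] //.
move/eqP: e => e; have : G1 <= Num.max G1 G2 by rewrite le_max lexx.
by rewrite -e leNgt lt.
Qed.

Lemma pick2 (G1 G2 : R) (P1 P2 : bool) : G1 < G2 ->
  [|| (G1 == Num.max G1 G2) && P1 | (G2 == Num.max G1 G2) && P2] -> P2.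
Proof.
move=> lt; case/orP => /andP [e h] //.
move/eqP: e => e; have : G2 <= Num.max G1 G2 by rewrite le_max lexx orbT.
by rewrite -e leNgt lt.
Qed.

Lemma ev_lt (u : nat -> R) l c : u n @[n --> \oo] --> l -> l < c -> \forall n \near \oo, u n < c.
Proof. move=> cu lc; exact: (@cvgr_lt R _ _ _ u l cu c lc). Qed.
Lemma ev_gt (u : nat -> R) l c : u n @[n --> \oo] --> l -> c < l -> \forall n \near \oo, c < u n.
Proof. move=> cu lc; exact: (@cvgr_gt R _ _ _ u l cu c lc). Qed.

Lemma mainS (r y1 y2 b1 b2 xb vb : R) (xs vs : nat -> R) (psi : R -> R) x :
  (r = 1 \/ r = -1) -> (forall y, derive1 phi (psi y) = y) ->
  xs n @[n --> \oo] --> xb -> vs n @[n --> \oo] --> vb ->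
  (forall n, frechet_subgrad (fun x => Num.max (r * phi (x - y1) - b1) (r * phi (x - y2) - b2))
     (xs n) (vs n)) ->
  Num.max (r * phi (xb - y1) - b1) (r * phi (xb - y2) - b2)
    + r * phi (x - xb + psi (r * vb)) - r * phi (psi (r * vb)) <=
  Num.max (r * phi (x - y1) - b1) (r * phi (x - y2) - b2).
Proof.
move=> hr hinv cx cv hF.
set w := psi (r * vb).
have hw : derive1 phi w = r * vb := hinv _.
set wn := fun n => psi (r * vs n).
have hwn : forall n, derive1 phi (wn n) = r * vs n := fun n => hinv _.
have cu : (r * vs n) @[n --> \oo] --> r * vb.
  by apply: cvgM; [exact: cvg_cst | exact: cv].
have ca1 : (xs n - y1) @[n --> \oo] --> xb - y1.
  by apply: cvgB; [exact: cx | exact: cvg_cst].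
have ca2 : (xs n - y2) @[n --> \oo] --> xb - y2.
  by apply: cvgB; [exact: cx | exact: cvg_cst].
have cG1 : (r * phi (xs n - y1) - b1) @[n --> \oo] --> r * phi (xb - y1) - b1 :=
  cvg_comp _ _ cx (gcont r y1 b1 xb).
have cG2 : (r * phi (xs n - y2) - b2) @[n --> \oo] --> r * phi (xb - y2) - b2 :=
  cvg_comp _ _ cx (gcont r y2 b2 xb).
have PNn := fun n => PN r y1 y2 b1 b2 (xs n) (vs n) (wn n) hr (hwn n) (hF n) _ _ erefl erefl.
set G1 := r * phi (xb - y1) - b1; set G2 := r * phi (xb - y2) - b2.
suff [U L] : [|| (G1 == Num.max G1 G2) && (w <= xb - y1) | (G2 == Num.max G1 G2) && (w <= xb - y2)] /\
  [|| (G1 == Num.max G1 G2) && (xb - y1 <= w) | (G2 == Num.max G1 G2) && (xb - y2 <= w)].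
  exact: (FIN _ _ _ _ _ _ _ _ hr _ _ erefl erefl U L).
have LLu := LL2 wn _ _ (fun n => r * vs n) _ _ _ w _ _ _ cu hwn hw.
have LLl := LL2' wn _ _ (fun n => r * vs n) _ _ _ w _ _ _ cu hwn hw.
have eG1 : r * phi (xb - y1) - b1 = G1 by [].
have eG2 : r * phi (xb - y2) - b2 = G2 by [].
case: (ltgtP G1 G2) => [lt|gt|eq].
- set c := (G1 + G2) / 2.
  have E1 : \forall n \near \oo, r * phi (xs n - y1) - b1 < c.
    apply: (ev_lt _ _ c cG1); rewrite /c ?eG1 ?eG2; lra.
  have E2 : \forall n \near \oo, c < r * phi (xs n - y2) - b2.
    apply: (ev_gt _ _ c cG2); rewrite /c ?eG1 ?eG2; lra.
  have H1 : \forall n \near \oo, wn n <= xs n - y2 \/ wn n <= xs n - y2.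
    near=> n; left; apply: (pick2 _ _ _ _ _ (PNn n).1).
    have h1 : r * phi (xs n - y1) - b1 < c by near: n.
    have h2 : c < r * phi (xs n - y2) - b2 by near: n.
    lra.
  have H2 : \forall n \near \oo, xs n - y2 <= wn n \/ xs n - y2 <= wn n.
    near=> n; left; apply: (pick2 _ _ _ _ _ (PNn n).2).
    have h1 : r * phi (xs n - y1) - b1 < c by near: n.
    have h2 : c < r * phi (xs n - y2) - b2 by near: n.
    lra.
  have [h|h] := LLu _ _ _ _ H1 ca2 ca2; have [h'|h'] := LLl _ _ _ _ H2 ca2 ca2;
    by split; apply/orP; right; rewrite eqxx.
- set c := (G1 + G2) / 2.
  have E1 : \forall n \near \oo, c < r * phi (xs n - y1) - b1.
    apply: (ev_gt _ _ c cG1); rewrite /c ?eG1 ?eG2; lra.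
  have E2 : \forall n \near \oo, r * phi (xs n - y2) - b2 < c.
    apply: (ev_lt _ _ c cG2); rewrite /c ?eG1 ?eG2; lra.
  have H1 : \forall n \near \oo, wn n <= xs n - y1 \/ wn n <= xs n - y1.
    near=> n; left; apply: (pick1 _ _ _ _ _ (PNn n).1).
    have h1 : c < r * phi (xs n - y1) - b1 by near: n.
    have h2 : r * phi (xs n - y2) - b2 < c by near: n.
    lra.
  have H2 : \forall n \near \oo, xs n - y1 <= wn n \/ xs n - y1 <= wn n.
    near=> n; left; apply: (pick1 _ _ _ _ _ (PNn n).2).
    have h1 : c < r * phi (xs n - y1) - b1 by near: n.
    have h2 : r * phi (xs n - y2) - b2 < c by near: n.
    lra.
  have [h|h] := LLu _ _ _ _ H1 ca1 ca1; have [h'|h'] := LLl _ _ _ _ H2 ca1 ca1;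
    by split; apply/orP; left; rewrite eqxx.
- have H1 : \forall n \near \oo, wn n <= xs n - y1 \/ wn n <= xs n - y2.
    by apply: nearW => n; exact: (pickboth _ _ _ _ (PNn n).1).
  have H2 : \forall n \near \oo, xs n - y1 <= wn n \/ xs n - y2 <= wn n.
    by apply: nearW => n; exact: (pickboth _ _ _ _ (PNn n).2).
  have [h|h] := LLu _ _ _ _ H1 ca1 ca2; have [h'|h'] := LLl _ _ _ _ H2 ca1 ca2;
    by rewrite eq eqxx /= ?h ?h' ?orbT.
Unshelve. all: by end_near. Qed.

End Aux.

End AuxM.

Local Open Scope ring_scope.

Theorem mainTheorem15 (R : realType) (phi : R -> R) (r y1 y2 b1 b2 : R) :
  standing_phi phi ->
  (r = 1 \/ r = -1) ->
  let f := fun x : R => Num.max (r * phi (x - y1) - b1) (r * phi (x - y2) - b2) in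
  forall xb vb : R, limiting_subgrad f xb vb ->
  forall x : R,
    f xb + r * phi (x - xb + derive1 (fconj phi) (r * vb))
         - r * phi (derive1 (fconj phi) (r * vb)) <= f x.
Proof.
move=> hs hr f xb vb [xs [vs [cx [_ [cv hF]]]]] x.
case: hs => hconv [hd [hstr [_ [_ [_ [_ [_ [_ hinv]]]]]]]].
exact: (@AuxM.mainS R phi hd hconv hstr r y1 y2 b1 b2 xb vb xs vs _ x hr hinv cx cv hF).
Qed.
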